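(* Let $s\in\mathbb N$, let $c_s>0$ be a constant, and for $m\in\mathbb N$ let $N_m=\sup\{N\in\mathbb N_0:|Q_N|\le c_sm2^m\}$. Under the complete random design, $$\Pr\Big(\sum_{\boldsymbol k\in Q_{N_m}}Z(\boldsymbol k)\ge2c_sm\Big)\le\frac1{c_sm}.$$
   Context: For $k\in\mathbb N_0$, $k=\sum_{\ell\ge1}a_\ell2^{\ell-1}$ with $a_\ell\in\{0,1\}$, let $\kappa=\{\ell:a_\ell=1\}$. For $\boldsymbol k\in\mathbb N_0^s$ with digit sets $\kappa_1,\dots,\kappa_s$, $\|\boldsymbol\kappa\|_1=\sum_j\sum_{\ell\in\kappa_j}\ell$; $Q_N=\{\boldsymbol k\in\mathbb N_0^s\setminus\{\boldsymbol0\}:\|\boldsymbol\kappa\|_1\le N\}$. Complete random design: random matrices $C_j\in\{0,1\}^{\infty\times m}$ ($j=1,\dots,s$) with all entries i.i.d. uniform on $\{0,1\}$; $Z(\boldsymbol k)=\mathbf 1\{\sum_j\sum_{\ell\in\kappa_j}C_j(\ell,:)=\boldsymbol0\bmod2\}$. *)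

(* Defs.v *)
From HB Require Import structures.
From mathcomp Require Import all_boot all_order all_algebra.
Set Implicit Arguments. Unset Strict Implicit. Unset Printing Implicit Defensive.
Import Order.TTheory GRing.Theory Num.Theory.

(* Binary digit a_l (l >= 1) of k = sum_l a_l 2^(l-1). *)
Definition digit (k l : nat) : bool := odd (k %/ 2 ^ l.-1).

(* sum_{l in kappa} l, where kappa = {l >= 1 : a_l = 1}; since k < 2^k,
   all digits with l > k vanish, so the sum over 1 <= l <= k is exact. *)
Definition digit_norm (k : nat) : nat := \sum_(1 <= l < k.+1 | digit k l) l.

Definition kappa_norm (s : nat) (k : 'I_s -> nat) : nat :=
  \sum_(j < s) digit_norm (k j).

(* Every k in N_0^s with ||kappa||_1 <= N has all digits at positions
   <= N, hence k_j < 2^N; so Q_N is represented inside the finite type of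
   vectors with entries in 'I_(2^N) (no element of Q_N is lost). *)
Definition QN (s N : nat) : {set {ffun 'I_s -> 'I_(2 ^ N)}} :=
  [set k : {ffun 'I_s -> 'I_(2 ^ N)} | [exists j, val (k j) != 0%N] &&
           (kappa_norm (fun j => val (k j)) <= N)%N].

(* Complete random design, restricted to the rows l = 1..N (row l is stored
   at index l-1); entries in {0,1} = bool, addition mod 2 = addb.
   Only these rows enter Z(k) for k in Q_N. *)
Definition design (s N m : nat) : finType :=
  {ffun 'I_s -> {ffun 'I_N * 'I_m -> bool}}.

Definition Zk (s N m : nat) (k : 'I_s -> nat) (C : design s N m) : bool :=
  [forall c : 'I_m,
     ~~ \big[addb/false]_(j < s) \big[addb/false]_(i < N | digit (k j) i.+1)
          C j (i, c)].

Definition prob (R : numFieldType) (T : finType) (E : pred T) : R :=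
  (#|[set x | E x]|%:R / #|T|%:R)%R.

(* N is N_m = sup{N in N_0 : |Q_N| <= c m 2^m} (a max, as the set is a
   finite nonempty set of naturals). *)
Definition is_Nm (R : numFieldType) (s : nat) (c : R) (m N : nat) : Prop :=
  ((#|QN s N|%:R <= c * m%:R * 2%:R ^+ m)%R) /\
  forall N', ((#|QN s N'|%:R <= c * m%:R * 2%:R ^+ m)%R) -> (N' <= N)%N.

(* Main.v *)
Require Import Defs.
From HB Require Import structures.
From mathcomp Require Import all_boot all_order all_algebra zify.
Import Order.TTheory GRing.Theory Num.Theory.
Set Implicit Arguments. Unset Strict Implicit.

Lemma digit_inj N : forall x y, x < 2 ^ N -> y < 2 ^ N ->
  (forall i, i < N -> digit x i.+1 = digit y i.+1) -> x = y.
Proof.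
elim: N => [|N IH] x y hx hy hd; first by rewrite expn0 in hx hy; lia.
have h0 := hd 0 isT. rewrite /digit /= !divn1 in h0.
have e : x %/ 2 = y %/ 2.
  apply: IH; rewrite ?expnS in hx hy; try lia.
  move=> i hi; have := hd i.+1 hi; rewrite /digit /= expnS !divnMA //.
rewrite (divn_eq x 2) (divn_eq y 2) e !modn2 h0 //.
Qed.

Lemma digit0 l : digit 0 l = false.
Proof. by rewrite /digit div0n. Qed.

Definition La {s N} (a : 'I_s -> 'I_N -> bool) (x : 'I_s -> 'I_N -> bool) : bool :=
  \big[addb/false]_(j < s) \big[addb/false]_(i < N | a j i) x j i.

Lemma La_xor s N a x y : @La s N a (fun j i => x j i (+) y j i) = La a x (+) La a y.
Proof.
rewrite /La -big_split /=; apply: eq_bigr => j _; by rewrite -big_split.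
Qed.

Lemma La_and s N a b x : @La s N a (fun j i => b && x j i) = b && La a x.
Proof.
case: b => //=; rewrite /La big1 // => j _; by rewrite big1.
Qed.

Lemma La_e s N a j0 i0 : @La s N a (fun j i => (j == j0) && (i == i0)) = a j0 i0.
Proof.
rewrite /La (bigD1 j0) //= eqxx [X in _ (+) X]big1 ?addbF.
  case: (boolP (a j0 i0)) => h.
    rewrite (bigD1 i0) //= eqxx big1 // => i /andP[_ /negbTE ->] //.
  rewrite big1 // => i hi /=; apply/negbTE; apply: contraNN h => /eqP <- //.
move=> j /negbTE hj; rewrite big1 // => i _; by rewrite hj.
Qed.

Lemma La_indep s N (a b : 'I_s -> 'I_N -> bool) :
  (exists j i, a j i != b j i) -> (exists j i, a j i) ->
  exists x, La a x && ~~ La b x.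
Proof.
move=> [j1 [i1 hd]] [j2 [i2 ha]].
case: (boolP (a j1 i1)) => h1.
  exists (fun j i => (j == j1) && (i == i1)); rewrite !La_e h1 /=.
  by move: hd; rewrite h1; case: (b j1 i1).
have hb1 : b j1 i1 by move: hd; rewrite (negbTE h1); case: (b j1 i1).
case: (boolP (b j2 i2)) => h2; last first.
  by exists (fun j i => (j == j2) && (i == i2)); rewrite !La_e ha h2.
exists (fun j i => ((j == j1) && (i == i1)) (+) ((j == j2) && (i == i2))).
by rewrite !La_xor !La_e ha h2 hb1 (negbTE h1).
Qed.

Lemma fiber_card (T U : finType) (f : T -> U) (aT : T -> T -> T) (aU : U -> U -> U) :
  (forall x y, f (aT x y) = aU (f x) (f y)) -> (forall x y, aT (aT x y) y = x) ->
  (forall u v, exists y, aU u (f y) = v) ->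
  forall u0, #|U| * #|[set x | f x == u0]| = #|T|.
Proof.
move=> hom inv sur u0.
have le u v : #|[set x | f x == u]| <= #|[set x | f x == v]|.
  have [y hy] := sur u v.
  have inj : injective (aT ^~ y) by apply: (can_inj (g := aT ^~ y)) => x; apply: inv.
  rewrite -(card_imset _ inj); apply: subset_leq_card; apply/subsetP => z.
  move/imsetP => [x]; rewrite !inE => /eqP hx ->; by rewrite hom hx hy.
have eqf u : #|[set x | f x == u]| = #|[set x | f x == u0]|.
  by apply/eqP; rewrite eqn_leq !le.
have -> : #|T| = \sum_(x : T) 1 by rewrite sum1_card.
rewrite (partition_big f predT) //=.
under eq_bigr => u _ do rewrite sum1dep_card eqf.
rewrite sum_nat_const mulnC; congr (_ * _); exact: eq_card.
Qed.

Lemma La_ext s N a (x y : 'I_s -> 'I_N -> bool) : (forall j i, x j i = y j i) -> La a x = La a y.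
Proof. move=> h; rewrite /La; apply: eq_bigr => j _; apply: eq_bigr => i _; exact: h. Qed.

Definition xorD s N m (C D : design s N m) : design s N m :=
  [ffun j => [ffun p => C j p (+) D j p]].

Lemma xorDK s N m (C D : design s N m) : xorD (xorD C D) D = C.
Proof. apply/ffunP => j; apply/ffunP => p; by rewrite !ffunE addbK. Qed.

Definition Lc s N m (a : 'I_s -> 'I_N -> bool) (C : design s N m) (c : 'I_m) :=
  La a (fun j i => C j (i, c)).

Lemma Lc_xor s N m a (C D : design s N m) c : Lc a (xorD C D) c = Lc a C c (+) Lc a D c.
Proof. rewrite /Lc -La_xor; apply: La_ext => j i; by rewrite !ffunE. Qed.

Definition mkD s N m (w : 'I_m -> bool) (x : 'I_s -> 'I_N -> bool) : design s N m :=
  [ffun j => [ffun p => w p.2 && x j p.1]].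

Lemma Lc_mkD s N m a w x c : Lc a (@mkD s N m w x) c = w c && La a x.
Proof. rewrite /Lc -La_and; apply: La_ext => j i; by rewrite !ffunE. Qed.

Lemma count1 s N m (a : 'I_s -> 'I_N -> bool) : (exists j i, a j i) ->
  2 ^ m * #|[set C : design s N m | [forall c, ~~ Lc a C c]]| = #|design s N m|.
Proof.
move=> [j0 [i0 h0]].
have := @fiber_card (design s N m) {ffun 'I_m -> bool} (fun C => [ffun c => Lc a C c])
  (@xorD s N m) (fun u v => [ffun c => u c (+) v c]).
move=> H; rewrite -(H _ _ _ [ffun => false]).
- rewrite card_ffun card_bool card_ord; congr (_ * _); apply: eq_card => C; rewrite !inE.
  apply/forallP/eqP => [h|h c]; first by apply/ffunP => c; rewrite !ffunE; apply/negbTE.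
  by move/ffunP: h => /(_ c); rewrite !ffunE => ->.
- move=> x y; apply/ffunP => c; by rewrite !ffunE Lc_xor.
- exact: xorDK.
move=> u v; exists (mkD (fun c => u c (+) v c) (fun j i => (j == j0) && (i == i0))).
apply/ffunP => c; by rewrite !ffunE Lc_mkD La_e h0 andbT addKb.
Qed.

Lemma count2 s N m (a b : 'I_s -> 'I_N -> bool) : (exists j i, a j i) ->
  (exists j i, b j i) -> (exists j i, a j i != b j i) ->
  4 ^ m * #|[set C : design s N m | [forall c, ~~ Lc a C c] && [forall c, ~~ Lc b C c]]|
   = #|design s N m|.
Proof.
move=> ha hb hd.
have [x1 /andP[hx1 hx1']] := La_indep hd ha.
have [x2 /andP[hx2 hx2']] : exists x, La b x && ~~ La a x.
  apply: La_indep => //; case: hd => j [i h]; exists j, i; by rewrite eq_sym.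
have := @fiber_card (design s N m) {ffun 'I_m -> bool * bool}
  (fun C => [ffun c => (Lc a C c, Lc b C c)])
  (@xorD s N m) (fun u v => [ffun c => ((u c).1 (+) (v c).1, (u c).2 (+) (v c).2)]).
move=> H; rewrite -(H _ _ _ [ffun => (false, false)]).
- rewrite card_ffun card_prod card_bool card_ord; congr (_ * _); apply: eq_card => C; rewrite !inE.
  apply/andP/eqP => [[/forallP h1 /forallP h2]|h].
    by apply/ffunP => c; rewrite !ffunE (negbTE (h1 c)) (negbTE (h2 c)).
  by split; apply/forallP => c; move/ffunP: h => /(_ c); rewrite !ffunE => -[h1 h2]; rewrite ?h1 ?h2.
- move=> x y; apply/ffunP => c; by rewrite !ffunE !Lc_xor.
- exact: xorDK.
move=> u v.
exists (xorD (mkD (fun c => (u c).1 (+) (v c).1) x1) (mkD (fun c => (u c).2 (+) (v c).2) x2)).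
apply/ffunP => c; rewrite !ffunE !Lc_xor !Lc_mkD hx1 hx2 (negbTE hx1') (negbTE hx2') /=.
by rewrite !andbF !andbT addbF addFb !addKb; case: (v c).
Qed.

Definition pat s N (k : {ffun 'I_s -> 'I_(2 ^ N)}) : 'I_s -> 'I_N -> bool :=
  fun j i => digit (val (k j)) i.+1.

Lemma Zk_Lc s N m (k : {ffun 'I_s -> 'I_(2 ^ N)}) (C : design s N m) :
  Zk (fun j => val (k j)) C = [forall c, ~~ Lc (pat k) C c].
Proof. by []. Qed.

Lemma digit_nz N x : x < 2 ^ N -> x != 0 -> exists i : 'I_N, digit x i.+1.
Proof.
move=> hx hnz; apply/existsP; apply: contraNT hnz => /existsPn h; apply/eqP.
apply: (digit_inj (N := N)) => // [|i hi]; first by rewrite expn_gt0.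
by rewrite digit0; apply/negbTE; exact: (h (Ordinal hi)).
Qed.

Lemma pat_nz s N (k : {ffun 'I_s -> 'I_(2 ^ N)}) : k \in QN s N -> exists j i, pat k j i.
Proof.
rewrite inE => /andP[/existsP[j hj] _]; exists j.
by have [i hi] := digit_nz (ltn_ord (k j)) hj; exists i.
Qed.

Lemma pat_diff s N (k k' : {ffun 'I_s -> 'I_(2 ^ N)}) : k != k' ->
  exists j i, pat k j i != pat k' j i.
Proof.
move=> hne.
have [j hj] : exists j, k j != k' j.
  apply/existsP; apply: contraNT hne => /existsPn h; apply/eqP/ffunP => j.
  by apply/eqP; apply/negPn; exact: h.
exists j; apply/existsP; apply: contraNT hj => /existsPn h; apply/eqP/val_inj.
apply: (digit_inj (N := N)) => [||i hi]; rewrite ?ltn_ord //; apply/eqP; apply/negPn; exact: (h (Ordinal hi)).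
Qed.

Lemma sumb (T : finType) (P : pred T) : \sum_(x : T) (P x : nat) = #|[set x | P x]|.
Proof.
rewrite -sum1dep_card [RHS]big_mkcond; apply: eq_bigr => x _; by case: (P x).
Qed.


Section Main.
Variables (s N m : nat).
Let T := design s N m.
Let Q := QN s N.
Let X (C : T) := (\sum_(k in Q) Zk (fun j => val (k j)) C)%N.

Lemma S1 : 2 ^ m * \sum_(C : T) X C = #|Q| * #|T|.
Proof.
rewrite /X exchange_big /= big_distrr /= -sum_nat_const; apply: eq_bigr => k hk.
by rewrite sumb -(count1 m (pat_nz hk)); congr (_ * _); apply: eq_card => C; rewrite !inE.
Qed.

Lemma S2 : 2 ^ m * 2 ^ m * \sum_(C : T) X C * X C + #|Q| * #|T|
   = #|Q| * (2 ^ m * #|T| + #|Q| * #|T|).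
Proof.
have e : \sum_(C : T) X C * X C =
   \sum_(k in Q) \sum_(k' in Q) #|[set C : T | Zk (fun j => val (k j)) C && Zk (fun j => val (k' j)) C]|.
  rewrite /X; under eq_bigr => C _ do rewrite big_distrl /=.
  rewrite exchange_big /=; apply: eq_bigr => k hk.
  under eq_bigr => C _ do rewrite big_distrr /=.
  rewrite exchange_big /=; apply: eq_bigr => k' hk'.
  rewrite -sumb; apply: eq_bigr => C _; by case: (Zk _ C); case: (Zk _ C).
have row k : k \in Q -> 2 ^ m * 2 ^ m * \sum_(k' in Q)
   #|[set C : T | Zk (fun j => val (k j)) C && Zk (fun j => val (k' j)) C]| + #|T|
   = 2 ^ m * #|T| + #|Q| * #|T|.
  move=> hk; rewrite (bigD1 k hk) /= mulnDr.
  have -> : #|[set C : T | Zk (fun j => val (k j)) C && Zk (fun j => val (k j)) C]|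
     = #|[set C : T | [forall c, ~~ Lc (pat k) C c]]|.
    by apply: eq_card => C; rewrite !inE andbb.
  rewrite -mulnA (count1 m (pat_nz hk)) -addnA; congr (_ + _).
  rewrite -sum_nat_const (bigD1 k hk) /= addnC big_distrr /=; congr (_ + _).
  apply: eq_bigr => k' /andP[hk' hne].
  rewrite -expnMn /= -(count2 m (pat_nz hk) (pat_nz hk') (pat_diff (negbT _))); last first.
    by apply/negbTE; rewrite eq_sym.
  by congr (_ * _); apply: eq_card => C; rewrite !inE.
rewrite e big_distrr /= -[in LHS]sum_nat_const -big_split /=.
rewrite -[in RHS]sum_nat_const; apply: eq_bigr => k hk; exact: row.
Qed.
End Main.

From mathcomp Require Import ring lra.
Local Open Scope ring_scope.

Unset Implicit Arguments.
Theorem lemma4 (R : realFieldType) (s : nat) (c : R) (m N : nat) :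
  (0 < s)%N -> 0 < c -> (0 < m)%N -> is_Nm s c m N ->
  prob R (fun C : design s N m =>
    2%:R * c * m%:R <= (\sum_(k in QN s N) Zk (fun j => val (k j)) C)%N%:R)
  <= 1 / (c * m%:R).
Proof.
move=> hs hc hm [hQ _].
have s1 := S1 s N m; have s2 := S2 s N m.
set T := design s N m in s1 s2 *.
set X := fun C : T => (\sum_(k in QN s N) Zk (fun j => val (k j)) C)%N.
rewrite -/(X _) in s1 s2 *.
rewrite /prob.
set E := [set C : T | _].
set n := #|T| in s1 s2 *. set q := #|QN s N| in hQ s1 s2 *.
set P := (2 ^ m)%N in s1 s2.
have hP : (2%:R ^+ m : R) = P%:R by rewrite /P natrX.
rewrite hP in hQ.
have n0 : (0 < n)%N.
  apply/card_gt0P; by exists [ffun => [ffun => false]].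
have P0 : (0 < P)%N by rewrite /P expn_gt0.
set x := fun C => (X C)%:R : R.
set Sx := \sum_(C : T) x C. set Sx2 := \sum_(C : T) x C * x C.
have e1 : P%:R * Sx = q%:R * n%:R.
  by rewrite /Sx /x -natr_sum -natrM s1 natrM.
have e2 : P%:R * P%:R * Sx2 + q%:R * n%:R = q%:R * (P%:R * n%:R + q%:R * n%:R).
  have := congr1 (fun z : nat => z%:R : R) s2; rewrite /= !(natrD, natrM) => <-.
  by rewrite /Sx2 /x natr_sum; congr (_ * _ + _); apply: eq_bigr => C _; rewrite natrM.
have eq : \sum_(C : T) (P%:R * x C - q%:R) ^+ 2
   = P%:R ^+ 2 * Sx2 - 2 * q%:R * (P%:R * Sx) + n%:R * q%:R ^+ 2.
  rewrite (eq_bigr (fun C => (P%:R ^+ 2 * (x C * x C) - 2 * q%:R * P%:R * x C) + q%:R ^+ 2));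
    last by move=> C _; ring.
  rewrite big_split /= sumrB -!mulr_sumr sumr_const -/Sx -/Sx2 -mulr_natr.
  have -> : #|(xpredT : pred T)| = n by [].
  ring.
have hq0 : 0 <= q%:R * n%:R :> R by rewrite -natrM ler0n.
have hP0 : 0 < P%:R :> R by rewrite ltr0n.
have hm0 : 0 < m%:R :> R by rewrite ltr0n.
have bnd : \sum_(C : T) (P%:R * x C - q%:R) ^+ 2 <= q%:R * P%:R * n%:R.
  rewrite eq e1; nra.
have cm0 : 0 < c * m%:R by apply: mulr_gt0.
have hb : #|E|%:R * (c * m%:R * P%:R) ^+ 2 <= \sum_(C : T) (P%:R * x C - q%:R) ^+ 2.
  rewrite (bigID (mem E)) /= -[X in X <= _]addr0 lerD //; last first.
    by apply: sumr_ge0 => C _; apply: sqr_ge0.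
  rewrite mulr_natl -sumr_const; apply: ler_sum => C; rewrite inE => hC.
  have h1 : 2 * c * m%:R * P%:R <= P%:R * x C.
    by rewrite mulrC ler_pM2l.
  have h2 : c * m%:R * P%:R <= P%:R * x C - q%:R by lra.
  have h3 : 0 <= c * m%:R * P%:R by apply: mulr_ge0; lra.
  by rewrite ler_sqr // ?nnegrE //; lra.
have fin : c * m%:R * #|E|%:R <= n%:R.
  have h := le_trans hb bnd.
  have hn : 0 <= n%:R :> R by rewrite ler0n.
  have h4 : q%:R * P%:R * n%:R <= c * m%:R * P%:R * P%:R * n%:R.
    by rewrite ler_wpM2r // ler_wpM2r // ltW.
  have h5 : #|E|%:R * (c * m%:R * P%:R) ^+ 2 <= c * m%:R * P%:R * P%:R * n%:R by lra.
  have hPP : 0 < c * m%:R * P%:R * P%:R by rewrite !mulr_gt0.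
  rewrite -(ler_pM2r hPP); lra.
rewrite ler_pdivrMr ?ltr0n // mul1r ler_pdivlMl //.
Qed.
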